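(* Let $K=(S,L,\to)$ be a Kripke structure and $\mathcal{C}$ a colouring of $S$ such that any two states with the same colour satisfy the same atomic propositions, have the same $\mathcal{C}$-coloured traces of length two, and have the same complete $\mathcal{C}$-coloured traces of length one. Then $\mathcal{C}$ is fully consistent.
   Context: Fix a set $\mathbf{AP}$ of atomic propositions. A Kripke structure is $K=(S,L,\to)$ with $L:S\to\mathcal{P}(\mathbf{AP})$ and $\to\subseteq S\times S$ (not necessarily total); a state $s$ satisfies $p\in\mathbf{AP}$ iff $p\in L(s)$. A finite path from $s$ is a sequence $s_0,\dots,s_n$ with $s_0=s$ and $s_k\to s_{k+1}$; an infinite path is defined analogously; a path is maximal if it is infinite or its last state has no successor. A colouring is a function $\mathcal{C}$ from $S$ into an arbitrary set of colours. For a path $\pi=s_0,s_1,\dots$, $\mathcal{C}(\pi)$ is obtained from $\mathcal{C}(s_0),\mathcal{C}(s_1),\dots$ by contracting each maximal (finite or infinite) block of consecutive equal colours to a single colour; for $\pi$ a path from $s$, $\mathcal{C}(\pi)$ is a $\mathcal{C}$-coloured trace of $s$, complete if $\pi$ is maximal; its length is its number of entries. $\mathcal{C}$ is fully consistent if any two states of the same colour satisfy the same atomic propositions and have the same complete $\mathcal{C}$-coloured traces. *)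

(* Defs.v *)
From Stdlib Require Import List Arith.
Import ListNotations.
Set Implicit Arguments.

Section Kripke.
Variables (S AP Col : Type).
Variable L : S -> AP -> Prop.
Variable R : S -> S -> Prop.
Variable C : S -> Col.

Fixpoint chain (x : S) (l : list S) : Prop :=
  match l with
  | [] => True
  | y :: r => R x y /\ chain y r
  end.

Definition fin_path (s : S) (l : list S) : Prop :=
  exists rest, l = s :: rest /\ chain s rest.

Definition inf_path (s : S) (p : nat -> S) : Prop :=
  p 0 = s /\ forall n, R (p n) (p (Datatypes.S n)).

Definition maximal_fin (l : list S) : Prop :=
  forall x, (exists l', l = l' ++ [x]) -> forall y, ~ R x y.

Inductive trace : Type :=
| TFin : list Col -> trace
| TInf : (nat -> Col) -> trace.

(* contraction of a finite colour sequence: each maximal block of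
   consecutive equal colours is contracted to a single colour *)
Inductive contractL : list Col -> list Col -> Prop :=
| cl_nil : contractL [] []
| cl_one : forall x, contractL [x] [x]
| cl_eq : forall x l r, contractL (x :: l) r -> contractL (x :: x :: l) r
| cl_neq : forall x y l r, x <> y -> contractL (y :: l) r ->
    contractL (x :: y :: l) (x :: r).

Definition contractI (c : nat -> Col) (t : trace) : Prop :=
  match t with
  | TFin l =>
      (* eventually constant: finitely many blocks, the last one infinite *)
      exists N, (forall n, N <= n -> c n = c N) /\ contractL (map c (seq 0 (Datatypes.S N))) l
  | TInf f =>
      (* g k = start index of the k-th block, which has colour f k *)
      exists g : nat -> nat, g 0 = 0 /\ (forall k, g k < g (Datatypes.S k)) /\
        (forall k n, g k <= n < g (Datatypes.S k) -> c n = f k) /\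
        (forall k, f k <> f (Datatypes.S k))
  end.

Definition ctrace (s : S) (t : trace) : Prop :=
  (exists l lc, fin_path s l /\ contractL (map C l) lc /\ t = TFin lc) \/
  (exists p, inf_path s p /\ contractI (fun n => C (p n)) t).

Definition complete_ctrace (s : S) (t : trace) : Prop :=
  (exists l lc, fin_path s l /\ maximal_fin l /\ contractL (map C l) lc /\ t = TFin lc) \/
  (exists p, inf_path s p /\ contractI (fun n => C (p n)) t).

Definition has_length (t : trace) (n : nat) : Prop :=
  match t with
  | TFin l => length l = n
  | TInf _ => False
  end.

Definition same_props (s s' : S) : Prop := forall p, L s p <-> L s' p.

Definition fully_consistent : Prop :=
  forall s s', C s = C s' ->
    same_props s s' /\ (forall t, complete_ctrace s t <-> complete_ctrace s' t).

End Kripke.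

(* Main.v *)
Require Import Defs.
From Stdlib Require Import List Arith Lia Classical ClassicalEpsilon.
Import ListNotations.

Inductive Seg {St Col : Type} (R : St -> St -> Prop) (C : St -> Col) : St -> St -> Prop :=
| seg1 : forall x y, R x y -> C y <> C x -> Seg R C x y
| segS : forall x y z, R x y -> C y = C x -> Seg R C y z -> Seg R C x z.

Lemma seq_map_S {A} (f : nat -> A) k :
  map f (seq 0 (S k)) = f 0 :: map (fun n => f (S n)) (seq 0 k).
Proof. simpl. f_equal. rewrite <- seq_shift, map_map. reflexivity. Qed.

Lemma contr_inv2 {Col} (a b : Col) t r : contractL (a :: b :: t) r ->
  (a = b /\ contractL (b :: t) r) \/ (a <> b /\ exists r', r = a :: r' /\ contractL (b :: t) r').
Proof. intro H; inversion H; subst; eauto. Qed.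

Lemma contr_inv1 {Col} (a : Col) r : contractL [a] r -> r = [a].
Proof. intro H; inversion H; auto. Qed.

Lemma contr_head {Col} : forall (l r : list Col), contractL l r ->
  forall a t, l = a :: t -> exists r', r = a :: r'.
Proof.
  induction 1; intros a t E; inversion E; subst; eauto.
Qed.

Lemma maximal_app {St} (R : St -> St -> Prop) a b : maximal_fin R (a ++ b) -> maximal_fin R b.
Proof.
  intros M x [l' E] y. apply (M x). exists (a ++ l'). rewrite E, app_assoc. reflexivity.
Qed.

Lemma maximal_cons {St} (R : St -> St -> Prop) a l : l <> [] -> maximal_fin R l -> maximal_fin R (a :: l).
Proof.
  intros NE M x [l' E] y. destruct l' as [|z l''].
  - simpl in E. inversion E; subst. congruence.
  - simpl in E. inversion E; subst. apply (M x). eauto.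
Qed.

Lemma pre_gen {St Col} (R : St -> St -> Prop) (C : St -> Col) x y m m' :
  R x y ->
  (forall t, contractL (C y :: t) m -> contractL (C x :: C y :: t) m') ->
  complete_ctrace R C y (TFin m) -> complete_ctrace R C x (TFin m').
Proof.
  intros Rxy HC [[l [lc [[rest [El Ch]] [M [Ct Et]]]]] | [p [[P0 Ps] CI]]].
  - inversion Et; subst. left. exists (x :: y :: rest), m'. split; [|split; [|split]].
    + exists (y :: rest). split; [reflexivity | simpl; auto].
    + apply maximal_cons; [discriminate | exact M].
    + simpl. apply HC. exact Ct.
    + reflexivity.
  - hnf in CI. destruct CI as [N [HN Ct]].
    right. exists (fun n => match n with 0 => x | S n => p n end). split.
    + split; [reflexivity|]. intros [|n]; [subst; exact Rxy | apply Ps].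
    + hnf. exists (S N). split.
      * intros [|n] Hn; [lia|]. apply HN. lia.
      * rewrite seq_map_S. cbn beta iota.
        rewrite seq_map_S in Ct |- *. rewrite P0 in Ct |- *. apply HC. exact Ct.
Qed.

Lemma pre_eq {St Col} (R : St -> St -> Prop) (C : St -> Col) x y m :
  R x y -> C x = C y -> complete_ctrace R C y (TFin m) -> complete_ctrace R C x (TFin m).
Proof.
  intros Rxy E. apply pre_gen; auto. intros t Ht. rewrite E. apply cl_eq. exact Ht.
Qed.

Lemma pre_neq {St Col} (R : St -> St -> Prop) (C : St -> Col) x y m :
  R x y -> C x <> C y -> complete_ctrace R C y (TFin m) -> complete_ctrace R C x (TFin (C x :: m)).
Proof.
  intros Rxy E. apply pre_gen; auto. intros t Ht. apply cl_neq; auto.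
Qed.

Lemma dec_fin {St Col} (R : St -> St -> Prop) (C : St -> Col) : forall rest x c d l,
  chain R x rest -> contractL (map C (x :: rest)) (c :: d :: l) ->
  exists u pre rest', rest = pre ++ u :: rest' /\ Seg R C x u /\ C u = d /\ C x = c /\
    chain R u rest' /\ contractL (map C (u :: rest')) (d :: l).
Proof.
  induction rest as [|y rest IH]; intros x c d l Ch Ct.
  - simpl in Ct. apply contr_inv1 in Ct. discriminate.
  - destruct Ch as [Rxy Ch]. simpl in Ct. apply contr_inv2 in Ct.
    destruct Ct as [[E Ct] | [NE [r' [Er Ct]]]].
    + destruct (IH y c d l Ch Ct) as [u [pre [rest' [E1 [Sg [Cu [Cy [Ch' Ct']]]]]]]].
      exists u, (y :: pre), rest'. repeat split; auto.
      * rewrite E1. reflexivity.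
      * apply segS with y; auto.
      * congruence.
    + inversion Er; subst. exists y, [], rest. repeat split; auto.
      * apply seg1; auto.
      * destruct (contr_head _ _ Ct (C y) (map C rest) eq_refl) as [r'' Er'].
        inversion Er'; auto.
Qed.

Lemma dec_inf {St Col} (R : St -> St -> Prop) (C : St -> Col) : forall N p c d l,
  (forall n, R (p n) (p (S n))) -> (forall n, N <= n -> C (p n) = C (p N)) ->
  contractL (map (fun n => C (p n)) (seq 0 (S N))) (c :: d :: l) ->
  exists k N', Seg R C (p 0) (p k) /\ C (p k) = d /\ C (p 0) = c /\
    (forall n, N' <= n -> C (p (k + n)) = C (p (k + N'))) /\
    contractL (map (fun n => C (p (k + n))) (seq 0 (S N'))) (d :: l).
Proof.
  induction N as [|N IH]; intros p c d l Ps HN Ct.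
  - simpl in Ct. apply contr_inv1 in Ct. discriminate.
  - rewrite seq_map_S in Ct.
    assert (E : map (fun n => C (p (S n))) (seq 0 (S N)) =
                C (p 1) :: map (fun n => C (p (S (S n)))) (seq 0 N)) by apply seq_map_S.
    rewrite E in Ct. apply contr_inv2 in Ct. rewrite <- E in Ct.
    destruct Ct as [[E1 Ct] | [NE [r' [Er Ct]]]].
    + destruct (IH (fun n => p (S n)) c d l (fun n => Ps (S n))) as [k [N' [Sg [Cd [Cc [HN' Ct']]]]]].
      * intros n Hn. rewrite (HN (S n)) by lia. symmetry. apply HN. lia.
      * exact Ct.
      * exists (S k), N'. repeat split; auto.
        -- apply segS with (p 1); auto.
        -- congruence.
    + inversion Er; subst. exists 1, N. repeat split; auto.
      * apply seg1; auto.
      * rewrite seq_map_S in Ct.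
        destruct (contr_head _ _ Ct _ _ eq_refl) as [r'' Er'].
        inversion Er'; auto.
      * intros n Hn. simpl. rewrite (HN (S n)) by lia. symmetry. apply HN. lia.
Qed.

Lemma CT_dec {St Col} (R : St -> St -> Prop) (C : St -> Col) x c d l :
  complete_ctrace R C x (TFin (c :: d :: l)) ->
  exists u, Seg R C x u /\ C u = d /\ C x = c /\ complete_ctrace R C u (TFin (d :: l)).
Proof.
  intros [[lst [lc [[rest [El Ch]] [M [Ct Et]]]]] | [p [[P0 Ps] CI]]].
  - inversion Et; subst.
    destruct (dec_fin R C rest x c d l Ch Ct) as [u [pre [rest' [E1 [Sg [Cu [Cx [Ch' Ct']]]]]]]].
    exists u. repeat split; auto. left. exists (u :: rest'), (d :: l). repeat split; auto.
    + exists rest'. auto.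
    + apply (maximal_app R (x :: pre)). subst rest. exact M.
  - hnf in CI. destruct CI as [N [HN Ct]].
    destruct (dec_inf R C N p c d l Ps HN Ct) as [k [N' [Sg [Cd [Cc [HN' Ct']]]]]].
    subst x. exists (p k). repeat split; auto. right. exists (fun n => p (k + n)). split.
    + split; [rewrite Nat.add_0_r; reflexivity|]. intro n. rewrite Nat.add_succ_r. apply Ps.
    + simpl. exists N'. split; auto.
Qed.

Lemma CT_comp {St Col} (R : St -> St -> Prop) (C : St -> Col) x u m :
  Seg R C x u -> complete_ctrace R C u (TFin m) -> complete_ctrace R C x (TFin (C x :: m)).
Proof.
  intro Sg. revert m. induction Sg as [x y Rxy NE | x y z Rxy E Sg IH]; intros m Hc.
  - apply pre_neq with y; auto.
  - rewrite <- E. apply pre_eq with y; auto.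
Qed.

Lemma CT_nil {St Col} (R : St -> St -> Prop) (C : St -> Col) x :
  ~ complete_ctrace R C x (TFin []).
Proof.
  intros [[lst [lc [[rest [El Ch]] [M [Ct Et]]]]] | [p [[P0 Ps] CI]]].
  - inversion Et; subst. destruct (contr_head _ _ Ct _ _ eq_refl) as [r E]. discriminate.
  - hnf in CI. destruct CI as [N [HN Ct]]. rewrite seq_map_S in Ct.
    destruct (contr_head _ _ Ct _ _ eq_refl) as [r E]. discriminate.
Qed.

Lemma seg_ctrace {St Col} (R : St -> St -> Prop) (C : St -> Col) x u :
  Seg R C x u -> exists rest, chain R x rest /\ contractL (map C (x :: rest)) [C x; C u].
Proof.
  induction 1 as [x y Rxy NE | x y z Rxy E Sg IH].
  - exists [y]. split; [simpl; auto|]. simpl. apply cl_neq; [congruence | constructor].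
  - destruct IH as [rest [Ch Ct]]. exists (y :: rest). split; [simpl; auto|].
    simpl. simpl in Ct. rewrite E in Ct |- *. apply cl_eq. exact Ct.
Qed.

Lemma key {St Col} (R : St -> St -> Prop) (C : St -> Col)
  (H2 : forall s s' t, C s = C s' -> has_length t 2 -> ctrace R C s t -> ctrace R C s' t)
  s s' u : C s = C s' -> Seg R C s u -> exists u', Seg R C s' u' /\ C u' = C u.
Proof.
  intros E Sg. destruct (seg_ctrace R C s u Sg) as [rest [Ch Ct]].
  assert (T : ctrace R C s (TFin [C s; C u])).
  { left. exists (s :: rest), [C s; C u]. repeat split; auto. exists rest; auto. }
  apply (H2 s s') in T; [|auto|reflexivity].
  destruct T as [[lst [lc [[rest' [El Ch']] [Ct' Et]]]] | [p [[P0 Ps] CI]]].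
  - inversion Et; subst.
    destruct (dec_fin R C rest' s' _ _ [] Ch' Ct') as [u' [_ [_ [_ [Sg' [Cu _]]]]]].
    eauto.
  - hnf in CI. destruct CI as [N [HN Ct']].
    destruct (dec_inf R C N p _ _ [] Ps HN Ct') as [k [_ [Sg' [Cd _]]]].
    subst s'. eauto.
Qed.

Lemma fin_transfer {St Col} (R : St -> St -> Prop) (C : St -> Col)
  (H2 : forall s s' t, C s = C s' -> has_length t 2 -> ctrace R C s t -> ctrace R C s' t)
  (H1 : forall s s' t, C s = C s' -> has_length t 1 ->
        complete_ctrace R C s t -> complete_ctrace R C s' t) :
  forall l s s', C s = C s' -> complete_ctrace R C s (TFin l) -> complete_ctrace R C s' (TFin l).
Proof.
  induction l as [|c r IH]; intros s s' E Hc.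
  - exfalso. exact (CT_nil R C s Hc).
  - destruct r as [|d l].
    + apply (H1 s s'); auto; reflexivity.
    + destruct (CT_dec R C s c d l Hc) as [u [Sg [Cu [Cs Hu]]]].
      destruct (key R C H2 s s' u E Sg) as [u' [Sg' Cu']].
      assert (Hu' : complete_ctrace R C u' (TFin (d :: l))) by (apply (IH u); congruence).
      pose proof (CT_comp R C s' u' _ Sg' Hu') as Hr. congruence.
Qed.

Lemma build_seq {A} (P : nat -> A -> Prop) (Q : nat -> A -> A -> Prop) a0 :
  P 0 a0 -> (forall k x, P k x -> exists y, Q k x y /\ P (S k) y) ->
  exists b : nat -> A, b 0 = a0 /\ forall k, P k (b k) /\ Q k (b k) (b (S k)).
Proof.
  intros P0 Hs.
  assert (Hn : forall k x, exists y, P k x -> Q k x y /\ P (S k) y).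
  { intros k x. destruct (classic (P k x)) as [Hp|Hp].
    - destruct (Hs k x Hp) as [y Hy]. exists y. auto.
    - exists x. intro; contradiction. }
  pose (nxt := fun k x => proj1_sig (constructive_indefinite_description _ (Hn k x))).
  assert (Hnxt : forall k x, P k x -> Q k x (nxt k x) /\ P (S k) (nxt k x)).
  { intros k x. unfold nxt. destruct (constructive_indefinite_description _ (Hn k x)). auto. }
  pose (b := fix b k := match k with 0 => a0 | S k => nxt k (b k) end).
  exists b. split; [reflexivity|].
  assert (Pb : forall k, P k (b k)).
  { induction k; simpl; auto. apply Hnxt. auto. }
  intro k. split; auto. apply Hnxt. auto.
Qed.

Lemma fun_choice {A B} (P : A -> B -> Prop) :
  (forall a, exists b, P a b) -> exists g, forall a, P a (g a).
Proof.
  intro H. exists (fun a => proj1_sig (constructive_indefinite_description _ (H a))).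
  intro a. destruct (constructive_indefinite_description _ (H a)). auto.
Qed.

Lemma seg_list {St Col} (R : St -> St -> Prop) (C : St -> Col) x y :
  Seg R C x y -> exists m, chain R x (m ++ [y]) /\ Forall (fun z => C z = C x) (x :: m).
Proof.
  induction 1 as [x y Rxy NE | x y z Rxy E Sg IH].
  - exists []. simpl. auto.
  - destruct IH as [m [Ch F]]. exists (y :: m). split; [simpl; auto|].
    constructor; auto. eapply Forall_impl; [|exact F]. intros a Ha. simpl in Ha. congruence.
Qed.

Lemma chain_nth {St} (R : St -> St -> Prop) : forall l x d i,
  chain R x l -> i < length l -> R (nth i (x :: l) d) (nth (S i) (x :: l) d).
Proof.
  induction l as [|y l IH]; intros x d i Ch Hi; simpl in Hi; [lia|].
  destruct Ch as [Rxy Ch]. destruct i as [|i]; [simpl; auto|].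
  apply (IH y d i Ch). lia.
Qed.

Lemma path_seg {St Col} (R : St -> St -> Prop) (C : St -> Col) (p : nat -> St) :
  (forall n, R (p n) (p (S n))) -> forall d i,
  (forall n, i <= n < i + S d -> C (p n) = C (p i)) -> C (p (i + S d)) <> C (p i) ->
  Seg R C (p i) (p (i + S d)).
Proof.
  intros Ps. induction d as [|d IH]; intros i Hc Hne.
  - rewrite Nat.add_1_r in *. apply seg1; auto.
  - apply segS with (p (S i)); auto.
    + apply Hc. lia.
    + replace (i + S (S d)) with (S i + S d) by lia. apply IH.
      * intros n Hn. rewrite (Hc n) by lia. symmetry. apply Hc. lia.
      * replace (S i + S d) with (i + S (S d)) by lia.
        rewrite (Hc (S i)) by lia. exact Hne.
Qed.

Fixpoint Gsum (len : nat -> nat) (k : nat) : nat :=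
  match k with 0 => 0 | S k => Gsum len k + len k end.

Fixpoint pos (len : nat -> nat) (n : nat) : nat * nat :=
  match n with
  | 0 => (0, 0)
  | S n => let (k, i) := pos len n in if S i <? len k then (k, S i) else (S k, 0)
  end.

Lemma pos_spec len : (forall k, 0 < len k) -> forall n k i, pos len n = (k, i) ->
  Gsum len k + i = n /\ i < len k.
Proof.
  intros Hl. induction n as [|n IH]; intros k i E.
  - simpl in E. inversion E; subst. simpl. split; [lia | apply Hl].
  - simpl in E. destruct (pos len n) as [k0 i0] eqn:Ep.
    destruct (IH k0 i0 eq_refl) as [H1 H2].
    destruct (S i0 <? len k0) eqn:Lt; inversion E; subst.
    + apply Nat.ltb_lt in Lt. split; lia.
    + apply Nat.ltb_ge in Lt. simpl. split; [lia | apply Hl].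
Qed.

Lemma Gsum_mono len : (forall k, 0 < len k) -> forall k1 k2, k1 < k2 -> Gsum len (S k1) <= Gsum len k2.
Proof.
  intros Hl k1 k2 H. induction H as [|k2 H IH]; simpl in *; [lia|]. specialize (Hl k2). lia.
Qed.

Lemma concat_path {St Col} (R : St -> St -> Prop) (C : St -> Col)
  (b : nat -> St) (m : nat -> list St) (f : nat -> Col) :
  (forall k, chain R (b k) (m k ++ [b (S k)])) ->
  (forall k, Forall (fun z => C z = f k) (b k :: m k)) ->
  (forall k, f k <> f (S k)) ->
  exists p, inf_path R (b 0) p /\ contractI (fun n => C (p n)) (TInf f).
Proof.
  intros Ch F Nf.
  set (len := fun k => length (b k :: m k)).
  assert (Hl : forall k, 0 < len k) by (intro k; unfold len; simpl; lia).
  set (p := fun n => let (k, i) := pos len n in nth i (b k :: m k) (b k)).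
  assert (Blk : forall k n, Gsum len k <= n < Gsum len (S k) -> fst (pos len n) = k).
  { intros k n Hn. destruct (pos len n) as [k' i] eqn:E.
    destruct (pos_spec len Hl n k' i E) as [H1 H2]. simpl.
    destruct (Nat.lt_trichotomy k' k) as [Lt|[Eq|Gt]]; auto.
    - pose proof (Gsum_mono len Hl k' k Lt). simpl in *. lia.
    - pose proof (Gsum_mono len Hl k k' Gt). simpl in *. lia. }
  exists p. split.
  - split; [reflexivity|]. intro n. unfold p. simpl.
    destruct (pos len n) as [k i] eqn:E.
    destruct (pos_spec len Hl n k i E) as [H1 H2].
    pose proof (chain_nth R (m k ++ [b (S k)]) (b k) (b k) i (Ch k)) as Cn.
    unfold len in H2. simpl in H2.
    destruct (S i <? len k) eqn:Lt.
    + apply Nat.ltb_lt in Lt. unfold len in Lt. simpl in Lt.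
      specialize (Cn ltac:(rewrite length_app; simpl; lia)).
      change (b k :: m k ++ [b (S k)]) with ((b k :: m k) ++ [b (S k)]) in Cn.
      rewrite !app_nth1 in Cn by (simpl; lia). exact Cn.
    + apply Nat.ltb_ge in Lt. unfold len in Lt. simpl in Lt.
      specialize (Cn ltac:(rewrite length_app; simpl; lia)).
      change (b k :: m k ++ [b (S k)]) with ((b k :: m k) ++ [b (S k)]) in Cn.
      rewrite app_nth1 in Cn by (simpl; lia).
      rewrite app_nth2 in Cn by (simpl; lia).
      replace (S i - length (b k :: m k)) with 0 in Cn by (simpl; lia).
      simpl in Cn. exact Cn.
  - exists (Gsum len). split; [reflexivity|]. split; [intro k; simpl; specialize (Hl k); lia|].
    split; [|exact Nf].
    intros k n Hn. pose proof (Blk k n Hn) as Hb. unfold p.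
    destruct (pos len n) as [k' i] eqn:E. simpl in Hb. subst k'.
    destruct (pos_spec len Hl n k i E) as [H1 H2].
    specialize (F k). rewrite Forall_forall in F. apply F. apply nth_In. exact H2.
Qed.

Lemma inf_transfer {St Col} (R : St -> St -> Prop) (C : St -> Col)
  (H2 : forall s s' t, C s = C s' -> has_length t 2 -> ctrace R C s t -> ctrace R C s' t)
  s s' f : C s = C s' -> complete_ctrace R C s (TInf f) -> complete_ctrace R C s' (TInf f).
Proof.
  intros E [[lst [lc [_ [_ [_ Et]]]]] | [p [[P0 Ps] CI]]]; [discriminate|].
  destruct CI as [g [G0 [Gi [Gc Nf]]]].
  assert (Cg : forall k, C (p (g k)) = f k) by (intro k; apply Gc; specialize (Gi k); lia).
  assert (Sg : forall k, Seg R C (p (g k)) (p (g (S k)))).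
  { intro k. specialize (Gi k).
    replace (g (S k)) with (g k + S (g (S k) - g k - 1)) by lia.
    apply path_seg; auto.
    - intros n Hn. rewrite Cg. apply Gc. lia.
    - replace (g k + S (g (S k) - g k - 1)) with (g (S k)) by lia. rewrite !Cg. auto. }
  destruct (build_seq (fun k x => C x = f k) (fun _ x y => Seg R C x y) s') as [b [B0 Bk]].
  - rewrite <- E, <- Cg, G0, P0. reflexivity.
  - intros k x Hx. destruct (key R C H2 (p (g k)) x (p (g (S k)))) as [y [Sy Cy]]; auto.
    + rewrite Cg. auto.
    + exists y. split; auto. rewrite Cy. apply Cg.
  - destruct (fun_choice (fun k mk => chain R (b k) (mk ++ [b (S k)]) /\
                 Forall (fun z => C z = C (b k)) (b k :: mk))) as [m Hm].
    { intro k. apply seg_list. apply Bk. }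
    destruct (concat_path R C b m f) as [q [Iq Cq]]; auto.
    + intro k. apply Hm.
    + intro k. destruct (Hm k) as [_ Fk]. eapply Forall_impl; [|exact Fk].
      intros a Ha. simpl in Ha. rewrite Ha. apply Bk.
    + right. exists q. rewrite <- B0. auto.
Qed.

Theorem lemma2p6 (S AP Col : Type) (L : S -> AP -> Prop) (R : S -> S -> Prop)
  (C : S -> Col)
  (H : forall s s', C s = C s' ->
     same_props L s s' /\
     (forall t, has_length t 2 -> (ctrace R C s t <-> ctrace R C s' t)) /\
     (forall t, has_length t 1 ->
        (complete_ctrace R C s t <-> complete_ctrace R C s' t))) :
  fully_consistent L R C.
Proof.
  assert (H2 : forall s s' t, C s = C s' -> has_length t 2 -> ctrace R C s t -> ctrace R C s' t).
  { intros s s' t E Ht. apply (proj1 (proj2 (H s s' E)) t Ht). }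
  assert (H1 : forall s s' t, C s = C s' -> has_length t 1 ->
        complete_ctrace R C s t -> complete_ctrace R C s' t).
  { intros s s' t E Ht. apply (proj2 (proj2 (H s s' E)) t Ht). }
  assert (T : forall s s' t, C s = C s' -> complete_ctrace R C s t -> complete_ctrace R C s' t).
  { intros s s' [l|f] E.
    - apply fin_transfer; auto.
    - apply inf_transfer; auto. }
  intros s s' E. split; [apply (H s s' E)|].
  intro t. split; apply T; congruence.
Qed.
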